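(* Let $S_X,S_Y$ be finite nonempty action sets, $\varphi:S_X\times S_Y\to\mathbb{R}$, $\lambda\in[0,1)$, and let $\tau_X^+,\tau_X^-\in\Delta(S_X)$ satisfy $$\min_{s_Y}\varphi(\tau_X^+,s_Y)\ge(1-\lambda)\max_{s_Y}\varphi(\tau_X^+,s_Y)+\lambda\max_{s_Y}\varphi(\tau_X^-,s_Y),$$ $$\max_{s_Y}\varphi(\tau_X^-,s_Y)\le\lambda\min_{s_Y}\varphi(\tau_X^+,s_Y)+(1-\lambda)\min_{s_Y}\varphi(\tau_X^-,s_Y),$$ (maxima and minima over $s_Y\in S_Y$). Then for every $K\in\big[\max_{s_Y}\varphi(\tau_X^-,s_Y),\ \min_{s_Y}\varphi(\tau_X^+,s_Y)\big]$ there exist $p_0\in[0,1]$ and $p^*:[0,1]\times S_Y\to[0,1]$ such that the reactive learning strategy with initial action $p_0\tau_X^++(1-p_0)\tau_X^-$ and reaction $$\sigma_X^*[p\tau_X^++(1-p)\tau_X^-,s_Y]=p^*[p,s_Y]\tau_X^++(1-p^*[p,s_Y])\tau_X^-$$ enforces $\varphi\equiv K$, i.e., is $(\varphi-K,\lambda)$-autocratic.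
   Context: Two players $X,Y$ play a repeated game with finite action sets $S_X,S_Y$; $\Delta(S)$ denotes the probability distributions on $S$; $\varphi(\tau_X,s_Y)=\mathbb{E}_{s_X\sim\tau_X}[\varphi(s_X,s_Y)]$. Histories: $\mathcal{H}=\bigcup_{T\ge0}(S_X\times S_Y)^T$; behavioral strategies are maps $\sigma:\mathcal{H}\to\Delta(S)$; players independently draw actions each round from their strategies evaluated at the history of realized action pairs, with $\mathbb{E}_{\sigma_X,\sigma_Y}$ the expectation over the resulting play. For a function $f:S_X\times S_Y\to\mathbb{R}$, $\sigma_X$ is $(f,\lambda)$-autocratic if for every behavioral strategy $\sigma_Y$ of $Y$, $\mathbb{E}_{\sigma_X,\sigma_Y}[(1-\lambda)\sum_{t\ge0}\lambda^tf(s_X^t,s_Y^t)]=0$. A reactive learning strategy with initial action $\sigma_X^0\in\Delta(S_X)$ and reaction $\sigma_X^*$ plays $\tau_X^0=\sigma_X^0$ in round $0$ and $\tau_X^{t+1}=\sigma_X^*[\tau_X^t,s_Y^t]$ in round $t+1$, where $s_Y^t$ is $Y$'s realized action in round $t$. *)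

(* Defs.v *)
From HB Require Import structures.
From mathcomp Require Import all_boot all_order all_algebra.
From mathcomp Require Import all_classical all_reals all_analysis.
Set Implicit Arguments. Unset Strict Implicit. Unset Printing Implicit Defensive.
Import Order.TTheory GRing.Theory Num.Theory.
Import numFieldNormedType.Exports.
Local Open Scope classical_set_scope.
Local Open Scope ring_scope.

Section RepeatedGame.
Variable R : realType.
Variables SX SY : finType.

Definition is_dist (S : finType) (d : {ffun S -> R}) : Prop :=
  (forall s, 0 <= d s) /\ \sum_(s : S) d s = 1.

Definition phi_mix (phi : SX -> SY -> R) (tau : {ffun SX -> R}) (y : SY) : R :=
  \sum_(x : SX) tau x * phi x y.

(* maximum / minimum of a real function on a (nonempty) finite type;
   default value 0 if the type is empty (never used: S_Y is assumed nonempty) *)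
Definition fmax (S : finType) (F : S -> R) : R :=
  match [pick y : S] with
  | Some y0 => \big[Num.max/F y0]_(y : S) F y
  | None => 0
  end.
Definition fmin (S : finType) (F : S -> R) : R :=
  match [pick y : S] with
  | Some y0 => \big[Num.min/F y0]_(y : S) F y
  | None => 0
  end.

(* histories: finite sequences of realized action pairs (oldest first) *)
Definition hist := seq (SX * SY).

Definition stratX := hist -> {ffun SX -> R}.
Definition stratY := hist -> {ffun SY -> R}.

(* probability that the play starts with the history [pre ++ h], given that
   it starts with [pre] *)
Fixpoint hist_prob (sX : stratX) (sY : stratY) (pre : hist) (h : hist) : R :=
  match h with
  | [::] => 1
  | (x, y) :: h' => sX pre x * sY pre y * hist_prob sX sY (rcons pre (x, y)) h'
  end.

Definition stage_exp (sX : stratX) (sY : stratY) (f : SX -> SY -> R) (t : nat) : R :=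
  \sum_(h : t.-tuple (SX * SY))
     hist_prob sX sY [::] h *
       \sum_(x : SX) \sum_(y : SY) sX h x * sY h y * f x y.

(* sigma_X is (f,lambda)-autocratic: for every behavioral strategy of Y,
   E[(1-lambda) sum_t lambda^t f(s^t)] = 0.  Since f is bounded and
   lambda < 1, the expectation of the discounted sum is the (absolutely
   convergent) series of discounted expected stage payoffs. *)
Definition autocratic (f : SX -> SY -> R) (lam : R) (sX : stratX) : Prop :=
  forall sY : stratY, (forall h, is_dist (sY h)) ->
    series (fun t => (1 - lam) * lam ^+ t * stage_exp sX sY f t) n @[n --> \oo] --> (0 : R).

Definition mixp (tp tm : {ffun SX -> R}) (p : R) : {ffun SX -> R} :=
  [ffun x => p * tp x + (1 - p) * tm x].

Definition react_state (p0 : R) (pstar : R -> SY -> R) (h : hist) : R :=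
  foldl (fun p xy => pstar p xy.2) p0 h.

Definition reactive (tp tm : {ffun SX -> R}) (p0 : R) (pstar : R -> SY -> R) : stratX :=
  fun h => mixp tp tm (react_state p0 pstar h).

End RepeatedGame.

(* Main.v *)
Require Import Defs.
From HB Require Import structures.
From mathcomp Require Import all_boot all_order all_algebra.
From mathcomp Require Import all_classical all_reals all_analysis.
Import Order.TTheory GRing.Theory Num.Theory.
Set Implicit Arguments. Unset Strict Implicit. Unset Printing Implicit Defensive.
Local Open Scope ring_scope.

Definition Eh (R : realType) (SX SY : finType) (sX : stratX R SX SY) (sY : stratY R SX SY)
  (pre : hist SX SY) (t : nat) (F : hist SX SY -> R) : R :=
  \sum_(h : t.-tuple (SX * SY)) hist_prob sX sY pre h * F (pre ++ h).

Lemma Eh0 (R : realType) (SX SY : finType) sX sY pre F :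
  @Eh R SX SY sX sY pre 0 F = F pre.
Proof.
rewrite /Eh (big_pred1 [tuple]) /=; first by rewrite cats0 mul1r.
move=> h; apply/esym/eqP; apply: val_inj; by case: h => [[]].
Qed.

Lemma EhS (R : realType) (SX SY : finType) sX sY pre t F :
  @Eh R SX SY sX sY pre t.+1 F =
  \sum_(x : SX) \sum_(y : SY) sX pre x * sY pre y * Eh sX sY (rcons pre (x, y)) t F.
Proof.
rewrite /Eh.
rewrite (reindex (fun p : (SX * SY) * t.-tuple (SX * SY) => [tuple of p.1 :: p.2])); last first.
  exists (fun u : t.+1.-tuple (SX * SY) => (thead u, [tuple of behead u])).
    by move=> [z h] _ /=; rewrite theadE; congr pair; apply: val_inj.
  by move=> u _ /=; rewrite -tuple_eta.
rewrite -(pair_bigA _ (fun (z : SX * SY) (h : t.-tuple (SX * SY)) =>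
   hist_prob sX sY pre [tuple of z :: h] * F (pre ++ [tuple of z :: h]))) /=.
rewrite (pair_big _ _ (fun x y => sX pre x * sY pre y * _)) /=.
apply: eq_bigr => -[x y] _.
rewrite big_distrr /=; apply: eq_bigr => h _.
by rewrite -cat_rcons mulrA.
Qed.
From mathcomp Require Import ring lra.

Lemma tele (R : realType) (SX SY : finType) (sX : stratX R SX SY) (sY : stratY R SX SY)
  (f : SX -> SY -> R) (Wh : hist SX SY -> R) (lam : R)
  (hloc : forall h, Wh h = (1 - lam) * (\sum_x \sum_y sX h x * sY h y * f x y)
       + lam * \sum_x \sum_y sX h x * sY h y * Wh (rcons h (x, y))) :
  forall n pre, \sum_(t < n) (1 - lam) * lam ^+ t *
     Eh sX sY pre t (fun h => \sum_x \sum_y sX h x * sY h y * f x y)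
   = Wh pre - lam ^+ n * Eh sX sY pre n Wh.
Proof.
set g := (fun h => _).
elim=> [|n IH] pre; first by rewrite big_ord0 Eh0 expr0 mul1r subrr.
transitivity ((1 - lam) * g pre + lam * \sum_x \sum_y sX pre x * sY pre y *
   \sum_(t < n) (1 - lam) * lam ^+ t * Eh sX sY (rcons pre (x, y)) t g).
  rewrite big_ord_recl expr0 mulr1 Eh0; congr (_ + _).
  under [X in _ = _ * X]eq_bigr do under eq_bigr do rewrite big_distrr /=.
  under [X in _ = _ * X]eq_bigr do rewrite exchange_big /=.
  rewrite [X in _ = _ * X]exchange_big /= [RHS]big_distrr /=.
  apply: eq_bigr => t _.
  rewrite /bump /= add1n EhS !big_distrr /=; apply: eq_bigr => x _.
  rewrite !big_distrr /=; apply: eq_bigr => y _.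
  rewrite exprS; ring.
under eq_bigr do under eq_bigr do rewrite IH mulrBr.
under eq_bigr do rewrite sumrB.
rewrite sumrB mulrBr addrA -hloc EhS; congr (_ - _).
rewrite exprS -mulrA; congr (_ * _).
rewrite big_distrr; apply: eq_bigr => x _.
rewrite big_distrr; apply: eq_bigr => y _.
by rewrite /=; ring.
Qed.

Lemma Eh_bound (R : realType) (SX SY : finType) (sX : stratX R SX SY) (sY : stratY R SX SY)
  (F : hist SX SY -> R) (C : R)
  (hX : forall h, is_dist (sX h)) (hY : forall h, is_dist (sY h))
  (hF : forall h, `|F h| <= C) : forall n pre, `|Eh sX sY pre n F| <= C.
Proof.
elim=> [|n IH] pre; first by rewrite Eh0.
rewrite EhS.
have [hx0 hx1] := hX pre; have [hy0 hy1] := hY pre.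
have -> : C = \sum_x \sum_y sX pre x * sY pre y * C.
  under eq_bigr => x _ do rewrite -big_distrl -big_distrr /= hy1 mulr1.
  by rewrite -big_distrl /= hx1 mul1r.
apply: le_trans (ler_norm_sum _ _ _) _; apply: ler_sum => x _.
apply: le_trans (ler_norm_sum _ _ _) _; apply: ler_sum => y _.
rewrite normrM ger0_norm ?mulr_ge0 //; apply: ler_wpM2l; first by rewrite mulr_ge0.
exact: IH.
Qed.

Lemma fmin_le (R : realType) (S : finType) (F : S -> R) y : fmin F <= F y.
Proof.
rewrite /fmin; case: pickP => [y0 _|h]; first exact: bigmin_le.
by have := h y.
Qed.

Lemma fmax_ge (R : realType) (S : finType) (F : S -> R) y : F y <= fmax F.
Proof.
rewrite /fmax; case: pickP => [y0 _|h]; first exact: le_bigmax.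
by have := h y.
Qed.

Lemma state_range (R : realType) (SX SY : finType) (pstar : R -> SY -> R)
  (hps : forall p y, 0 <= pstar p y <= 1) :
  forall (h : hist SX SY) p, 0 <= p <= 1 -> 0 <= foldl (fun p xy => pstar p xy.2) p h <= 1.
Proof. by elim=> [|xy h IH] p hp //=; apply: IH. Qed.

Lemma mix_sum (R : realType) (SX SY : finType) (phi : SX -> SY -> R) tp tm p y K
  (htp : is_dist tp) (htm : is_dist tm) :
  \sum_x mixp tp tm p x * (phi x y - K) =
  p * phi_mix phi tp y + (1 - p) * phi_mix phi tm y - K.
Proof.
have [_ h1] := htp; have [_ h2] := htm.
under eq_bigr do rewrite ffunE mulrBr.
rewrite sumrB -big_distrl /= big_split /= -!big_distrr /= h1 h2 !mulr1.
under eq_bigr do rewrite mulrDl -!mulrA.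
by rewrite big_split /= -!big_distrr /= /phi_mix; ring.
Qed.

Lemma key (R : realType) (lam P Q K Amax Bmin ay b_y p : R)
  (l0 : 0 <= lam) (l1 : lam < 1) (ha1 : P <= ay) (ha2 : ay <= Amax)
  (hb1 : Bmin <= b_y) (hb2 : b_y <= Q)
  (H1 : (1 - lam) * Amax + lam * Q <= P) (H2 : Q <= lam * P + (1 - lam) * Bmin)
  (hK1 : Q <= K) (hK2 : K <= P) (p0 : 0 <= p) (p1 : p <= 1) :
  let v := ((p * P + (1 - p) * Q - (1 - lam) * (p * ay + (1 - p) * b_y)) / lam - Q) / (P - Q) in
  let ps := if (0 <= v) && (v <= 1) then v else 0 in
  p * P + (1 - p) * Q - K = (1 - lam) * (p * ay + (1 - p) * b_y - K) + lam * (ps * P + (1 - ps) * Q - K).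
Proof.
move=> v ps.
have [e0|lpos] := eqVneq lam 0.
  subst lam.
  have eA : ay = P by nra.
  have eB : b_y = Q by nra.
  by rewrite eA eB mul0r addr0 subr0 mul1r.
have [ePQ|nPQ] := eqVneq P Q.
  have eK : K = P by lra.
  have eA : ay = P by nra.
  have eB : b_y = Q by nra.
  rewrite eA eB -ePQ eK; ring.
have lp : 0 < lam by rewrite lt_neqAle eq_sym lpos.
have PQ : 0 < P - Q by rewrite subr_gt0 lt_neqAle eq_sym nPQ /=; lra.
set w := p * P + (1 - p) * Q - (1 - lam) * (p * ay + (1 - p) * b_y).
have h1 : lam * Q <= P - (1 - lam) * ay by nra.
have h2 : lam * Q <= Q - (1 - lam) * b_y by nra.
have h3 : P - (1 - lam) * ay <= lam * P by nra.
have h4 : Q - (1 - lam) * b_y <= lam * P by nra.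
have ew : w = p * (P - (1 - lam) * ay) + (1 - p) * (Q - (1 - lam) * b_y) by rewrite /w; ring.
have w1 : lam * Q <= w by rewrite ew; nra.
have w2 : w <= lam * P by rewrite ew; nra.
have ev : v * (P - Q) = w / lam - Q by rewrite /v mulfVK // gt_eqF.
have wl1 : Q <= w / lam by rewrite ler_pdivlMr // mulrC.
have wl2 : w / lam <= P by rewrite ler_pdivrMr // mulrC.
have v0 : 0 <= v by nra.
have v1 : v <= 1 by nra.
rewrite /ps v0 v1 /=.
have -> : v * P + (1 - v) * Q = v * (P - Q) + Q by ring.
rewrite ev /w; field.
by rewrite lpos.
Qed.

Import numFieldNormedType.Exports.
Local Open Scope classical_set_scope.

Theorem lemma2 (R : realType) (SX SY : finType)
  (hSX : (0 < #|SX|)%N) (hSY : (0 < #|SY|)%N)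
  (phi : SX -> SY -> R) (lam : R) (hlam0 : 0 <= lam) (hlam1 : lam < 1)
  (tp tm : {ffun SX -> R}) (htp : is_dist tp) (htm : is_dist tm)
  (H1 : fmin (phi_mix phi tp)
        >= (1 - lam) * fmax (phi_mix phi tp) + lam * fmax (phi_mix phi tm))
  (H2 : fmax (phi_mix phi tm)
        <= lam * fmin (phi_mix phi tp) + (1 - lam) * fmin (phi_mix phi tm))
  (K : R) (hK1 : fmax (phi_mix phi tm) <= K) (hK2 : K <= fmin (phi_mix phi tp)) :
  exists (p0 : R) (pstar : R -> SY -> R),
    [/\ 0 <= p0 <= 1,
        (forall p y, 0 <= p <= 1 -> 0 <= pstar p y <= 1) &
        autocratic (fun x y => phi x y - K) lam (reactive tp tm p0 pstar)].
Proof.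
pose a := phi_mix phi tp; pose b := phi_mix phi tm.
pose P := fmin a; pose Q := fmax b; pose Amax := fmax a; pose Bmin := fmin b.
change (is_true ((1 - lam) * Amax + lam * Q <= P)) in H1.
change (is_true (Q <= lam * P + (1 - lam) * Bmin)) in H2.
change (is_true (Q <= K)) in hK1. change (is_true (K <= P)) in hK2.
pose v p y := ((p * P + (1 - p) * Q - (1 - lam) * (p * a y + (1 - p) * b y)) / lam - Q) / (P - Q).
pose pstar p y := if (0 <= v p y) && (v p y <= 1) then v p y else 0.
pose p0 := (K - Q) / (P - Q).
have hps : forall p y, 0 <= pstar p y <= 1.
  move=> p y; rewrite /pstar; case: ifP => // _; by rewrite lexx ler01.
have hp0 : 0 <= p0 <= 1.
  have [ePQ|nPQ] := eqVneq P Q; first by rewrite /p0 ePQ subrr invr0 mulr0 lexx ler01.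
  have PQ : 0 < P - Q by rewrite subr_gt0 lt_neqAle eq_sym nPQ /=; lra.
  rewrite /p0; apply/andP; split.
    by apply: divr_ge0; lra.
  by rewrite ler_pdivrMr // mul1r; lra.
exists p0, pstar; split => // sY hY.
pose W p := p * P + (1 - p) * Q - K.
have hkey : forall p y, 0 <= p <= 1 ->
    W p = (1 - lam) * (p * a y + (1 - p) * b y - K) + lam * W (pstar p y).
  move=> p y /andP[p0' p1'].
  apply: (@key R lam P Q K Amax Bmin (a y) (b y) p) => //;
    [exact: fmin_le | exact: fmax_ge | exact: fmin_le | exact: fmax_ge].
have hW0 : W p0 = 0.
  rewrite /W /p0; have [ePQ|nPQ] := eqVneq P Q.
    rewrite ePQ subrr invr0 mulr0; lra.
  have PQ : P - Q != 0 by rewrite subr_eq0.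
  have -> : (K - Q) / (P - Q) * P + (1 - (K - Q) / (P - Q)) * Q - K
     = (K - Q) / (P - Q) * (P - Q) + Q - K by ring.
  rewrite divfK //; ring.
pose sX := reactive tp tm p0 pstar.
have hst : forall h : hist SX SY, 0 <= react_state p0 pstar h <= 1.
  by move=> h; exact: (@state_range R SX SY pstar hps h p0 hp0).
have [tp0 tp1] := htp; have [tm0 tm1] := htm.
have hX : forall h, is_dist (sX h).
  move=> h; have /andP[q0 q1] := hst h; split.
    move=> x; rewrite /sX /reactive /mixp ffunE.
    have := tp0 x; have := tm0 x; nra.
  rewrite /sX /reactive /mixp.
  under eq_bigr do rewrite ffunE.
  by rewrite big_split /= -!big_distrr /= tp1 tm1 !mulr1 addrC subrK.
pose Wh (h : hist SX SY) := W (react_state p0 pstar h).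
have hloc : forall h : hist SX SY, Wh h = (1 - lam) * (\sum_x \sum_y sX h x * sY h y * (phi x y - K))
       + lam * \sum_x \sum_y sX h x * sY h y * Wh (rcons h (x, y)).
  move=> h; set p := react_state p0 pstar h.
  have [_ hX1] := hX h; have [_ hY1] := hY h.
  have e1 : \sum_x \sum_y sX h x * sY h y * (phi x y - K)
          = \sum_y sY h y * (p * a y + (1 - p) * b y - K).
    rewrite exchange_big; apply: eq_bigr => y _ /=.
    rewrite -(@mix_sum R SX SY phi tp tm p y K htp htm) big_distrr /=.
    by apply: eq_bigr => x _; rewrite /sX /reactive -/p; ring.
  have e2 : \sum_x \sum_y sX h x * sY h y * Wh (rcons h (x, y))
          = \sum_y sY h y * W (pstar p y).
    rewrite exchange_big; apply: eq_bigr => y _ /=.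
    have -> : sY h y * W (pstar p y) = \sum_x sX h x * (sY h y * W (pstar p y)).
      by rewrite -big_distrl /= hX1 mul1r.
    apply: eq_bigr => x _.
    by rewrite /Wh /react_state foldl_rcons -/(react_state p0 pstar h) -/p mulrA.
  rewrite e1 e2 /Wh -/p.
  transitivity (\sum_y sY h y * W p); first by rewrite -big_distrl /= hY1 mul1r.
  rewrite !big_distrr -big_split /=; apply: eq_bigr => y _.
  rewrite (hkey p y (hst h)); ring.
pose C := `|P| + `|Q| + `|K|.
have hWb : forall h : hist SX SY, `|Wh h| <= C.
  move=> h; rewrite /Wh /W; move: (hst h).
  set q := react_state p0 pstar h => /andP[q0 q1].
  have := ler_norml P `|P|; rewrite lexx => /esym/andP[nP1 nP2].
  have := ler_norml Q `|Q|; rewrite lexx => /esym/andP[nQ1 nQ2].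
  have := ler_norml K `|K|; rewrite lexx => /esym/andP[nK1 nK2].
  have t1 : 0 <= q * (`|P| - P) by apply: mulr_ge0; lra.
  have t2 : 0 <= q * (`|P| + P) by apply: mulr_ge0; lra.
  have t3 : 0 <= (1 - q) * (`|Q| - Q) by apply: mulr_ge0; lra.
  have t4 : 0 <= (1 - q) * (`|Q| + Q) by apply: mulr_ge0; lra.
  have t5 : 0 <= (1 - q) * `|P| by apply: mulr_ge0; lra.
  have t6 : 0 <= q * `|Q| by apply: mulr_ge0; lra.
  rewrite ler_norml /C; apply/andP; split; nra.
have hser : forall n, series (fun t => (1 - lam) * lam ^+ t *
      stage_exp sX sY (fun x y => phi x y - K) t) n = - (lam ^+ n * Eh sX sY [::] n Wh).
  move=> n; rewrite seriesEord /=.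
  have := tele hloc n [::].
  rewrite /Wh /= hW0 add0r => <-.
  by [].
have hC : (fun n => C * lam ^+ n) @ \oo --> (0 : R).
  rewrite -(mulr0 C); apply: cvgMl_tmp; apply: cvg_expr.
  by rewrite ger0_norm.
have -> : series (fun t => (1 - lam) * lam ^+ t *
      stage_exp sX sY (fun x y => phi x y - K) t)
   = (fun n => - (lam ^+ n * Eh sX sY [::] n Wh)).
  by apply: funext => n; rewrite hser.
apply: (@squeeze_cvgr _ _ _ _ (fun n => - (C * lam ^+ n)) (fun n => C * lam ^+ n)).
- apply: nearW => n.
  have hb := Eh_bound hX hY hWb n [::].
  have ln : 0 <= lam ^+ n by apply: exprn_ge0.
  move: hb; rewrite ler_norml => /andP[b1 b2].
  apply/andP; split; nra.
- by rewrite -oppr0; apply: cvgN.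
- exact: hC.
Qed.
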